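(* Let $f,g$ satisfy the standing assumptions below and let $\beta>0$. Suppose $\beta\ge\frac{M_fQ_g}{\mu^3}$ and $\Phi(x):=f(x,y^*(x))$ is bounded below on $\mathbb{R}^n$. Then $h(x,y)$ is bounded below on $\mathbb{R}^n\times\mathbb{R}^p$.
   Context: Standing assumptions. (A1) Constants $M_f,\mu,L_g,Q_g>0$ exist such that: $f:\mathbb{R}^n\times\mathbb{R}^p\to\mathbb{R}$ is $M_f$-Lipschitz; $g$ is twice differentiable with $\nabla^2_{yy}g\succeq\mu I_p$; $\nabla g$ is $L_g$-Lipschitz; $\nabla^2_{yy}g,\nabla^2_{xy}g$ are $Q_g$-Lipschitz; $\nabla^2_{yy}g$ is continuously differentiable. (A2) $f$ is a potential function of a conservative field $\mathcal{D}_f$ with compact convex values of norm at most $M_f$. Notation: $y^*(x):=\arg\min_{y\in\mathbb{R}^p}g(x,y)$ (unique); $\mathcal{A}(x,y):=y-\nabla^2_{yy}g(x,y)^{-1}\nabla_yg(x,y)$; $h(x,y):=f(x,\mathcal{A}(x,y))+\frac\beta2\|\nabla_yg(x,y)\|^2$. *)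

(* Defs.v *)
(* All norms below are EUCLIDEAN norms (written out explicitly, since the
   library's canonical norm on 'rV is the max-norm). *)
From mathcomp Require Import all_boot all_algebra.
From mathcomp Require Import all_classical all_reals all_analysis.
Import GRing.Theory Num.Theory numFieldNormedType.Exports.
Set Implicit Arguments.
Unset Strict Implicit.
Unset Printing Implicit Defensive.
Local Open Scope ring_scope.
Local Open Scope classical_set_scope.

Definition enorm (R : realType) (m : nat) (v : 'rV[R]_m) : R :=
  Num.sqrt (\sum_(i < m) v 0 i ^+ 2).
Definition edot (R : realType) (m : nat) (u v : 'rV[R]_m) : R :=
  \sum_(i < m) u 0 i * v 0 i.

Definition pnorm (R : realType) (n p : nat) (z : 'rV[R]_n * 'rV[R]_p) : R :=
  Num.sqrt (enorm z.1 ^+ 2 + enorm z.2 ^+ 2).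
Definition pdot (R : realType) (n p : nat) (z w : 'rV[R]_n * 'rV[R]_p) : R :=
  edot z.1 w.1 + edot z.2 w.2.

Definition opnorm (R : realType) (m k : nat) (A : 'M[R]_(m, k)) : R :=
  sup [set enorm (v *m A) | v in [set v : 'rV[R]_m | enorm v <= 1]].

Definition ex (R : realType) (n p : nat) (i : 'I_n) : 'rV[R]_n * 'rV[R]_p :=
  (delta_mx 0 i, 0).
Definition ey (R : realType) (n p : nat) (j : 'I_p) : 'rV[R]_n * 'rV[R]_p :=
  (0, delta_mx 0 j).

Definition uncurry2 (R : realType) (n p : nat) (g : 'rV[R]_n -> 'rV[R]_p -> R)
  (z : 'rV[R]_n * 'rV[R]_p) : R := g z.1 z.2.

Definition grad_x (R : realType) (n p : nat) (g : 'rV[R]_n -> 'rV[R]_p -> R)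
  (x : 'rV[R]_n) (y : 'rV[R]_p) : 'rV[R]_n :=
  \row_i 'D_(@ex R n p i) (uncurry2 g) (x, y).
Definition grad_y (R : realType) (n p : nat) (g : 'rV[R]_n -> 'rV[R]_p -> R)
  (x : 'rV[R]_n) (y : 'rV[R]_p) : 'rV[R]_p :=
  \row_j 'D_(@ey R n p j) (uncurry2 g) (x, y).
Definition grad (R : realType) (n p : nat) (g : 'rV[R]_n -> 'rV[R]_p -> R)
  (z : 'rV[R]_n * 'rV[R]_p) : 'rV[R]_n * 'rV[R]_p :=
  (grad_x g z.1 z.2, grad_y g z.1 z.2).
Definition hess_yy (R : realType) (n p : nat) (g : 'rV[R]_n -> 'rV[R]_p -> R)
  (x : 'rV[R]_n) (y : 'rV[R]_p) : 'M[R]_p :=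
  \matrix_(i, j) 'D_(@ey R n p j) (fun w => 'D_(@ey R n p i) (uncurry2 g) w) (x, y).
Definition hess_xy (R : realType) (n p : nat) (g : 'rV[R]_n -> 'rV[R]_p -> R)
  (x : 'rV[R]_n) (y : 'rV[R]_p) : 'M[R]_(n, p) :=
  \matrix_(i, j) 'D_(@ex R n p i) (fun w => 'D_(@ey R n p j) (uncurry2 g) w) (x, y).

Definition lipschitz2 (R : realType) (n p : nat) (f : 'rV[R]_n -> 'rV[R]_p -> R)
  (M : R) : Prop :=
  forall x y x' y', `|f x y - f x' y'| <= M * pnorm ((x, y) - (x', y')).

Definition twice_differentiable (R : realType) (n p : nat)
  (g : 'rV[R]_n -> 'rV[R]_p -> R) : Prop :=
  (forall z : 'rV[R]_n * 'rV[R]_p, differentiable (uncurry2 g) z) /\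
  (forall z : 'rV[R]_n * 'rV[R]_p, differentiable (grad g) z).

Definition C1 (R : realType) (n p : nat) (F : 'rV[R]_n * 'rV[R]_p -> R) : Prop :=
  (forall z : 'rV[R]_n * 'rV[R]_p, differentiable F z) /\
  (forall v : 'rV[R]_n * 'rV[R]_p, continuous (fun z => 'D_v F z)).

Definition abs_cont (R : realType) (n p : nat) (c : R -> 'rV[R]_n * 'rV[R]_p) : Prop :=
  forall e : R, 0 < e -> exists2 d : R, 0 < d &
    forall (k : nat) (a b : 'I_k -> R),
      (forall i, 0 <= a i /\ a i <= b i /\ b i <= 1) ->
      (forall i j, i != j -> b i <= a j \/ b j <= a i) ->
      \sum_(i < k) (b i - a i) < d ->
      \sum_(i < k) pnorm (c (b i) - c (a i)) < e.

Definition chain_integrand (R : realType) (n p : nat)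
  (D : 'rV[R]_n * 'rV[R]_p -> set ('rV[R]_n * 'rV[R]_p))
  (c : R -> 'rV[R]_n * 'rV[R]_p) (t : R) : R :=
  sup [set pdot (derive1 c t) v | v in D (c t)].

(* Conservative field (Bolte--Pauwels, Def. 1): closed graph, nonempty compact
   values, and zero circulation along every absolutely continuous loop. *)
Definition conservative_field (R : realType) (n p : nat)
  (D : 'rV[R]_n * 'rV[R]_p -> set ('rV[R]_n * 'rV[R]_p)) : Prop :=
  closed [set zv : ('rV[R]_n * 'rV[R]_p) * ('rV[R]_n * 'rV[R]_p) | D zv.1 zv.2] /\
  (forall z, D z !=set0 /\ compact (D z)) /\
  (forall c : R -> 'rV[R]_n * 'rV[R]_p, abs_cont c -> c 0 = c 1 ->
     Rintegral lebesgue_measure `[0, 1] (chain_integrand D c) = 0).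

(* f is a potential of the conservative field D (Bolte--Pauwels, Def. 2). *)
Definition potential_of (R : realType) (n p : nat) (f : 'rV[R]_n -> 'rV[R]_p -> R)
  (D : 'rV[R]_n * 'rV[R]_p -> set ('rV[R]_n * 'rV[R]_p)) : Prop :=
  forall c : R -> 'rV[R]_n * 'rV[R]_p, abs_cont c ->
    uncurry2 f (c 1) = uncurry2 f (c 0) +
      Rintegral lebesgue_measure `[0, 1] (chain_integrand D c).

Definition convex_set_of (R : realType) (n p : nat)
  (S : set ('rV[R]_n * 'rV[R]_p)) : Prop :=
  forall u v (t : R), S u -> S v -> 0 <= t <= 1 -> S (t *: u + (1 - t) *: v).

(* y*(x) := argmin_y g(x, y) (the minimiser is unique under (A1)). *)
Definition ystar (R : realType) (n p : nat) (g : 'rV[R]_n -> 'rV[R]_p -> R)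
  (x : 'rV[R]_n) : 'rV[R]_p :=
  xget 0 [set y | forall y', g x y <= g x y'].

(* A(x,y) := y - [grad^2_yy g(x,y)]^{-1} grad_y g(x,y)  (row-vector convention) *)
Definition Amap (R : realType) (n p : nat) (g : 'rV[R]_n -> 'rV[R]_p -> R)
  (x : 'rV[R]_n) (y : 'rV[R]_p) : 'rV[R]_p :=
  y - grad_y g x y *m invmx (hess_yy g x y).

Definition hfun (R : realType) (n p : nat) (f g : 'rV[R]_n -> 'rV[R]_p -> R)
  (beta : R) (x : 'rV[R]_n) (y : 'rV[R]_p) : R :=
  f x (Amap g x y) + beta / 2 * enorm (grad_y g x y) ^+ 2.

(* Main.v *)
From HB Require Import structures.
Require Import Defs.
From mathcomp Require Import all_boot all_algebra.
From mathcomp Require Import all_classical all_reals all_analysis.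
From mathcomp Require Import ring lra.
Import mathcomp.order.order.Order.TTheory GRing.Theory Num.Theory numFieldNormedType.Exports.
Local Open Scope ring_scope.
Local Open Scope classical_set_scope.

Section S.
Variable R : realType.

Lemma line_is_derive (V : normedModType R) (F : V -> R) (z v : V) (t : R) :
  derivable F (z + t *: v) v ->
  is_derive t 1 (fun s => F (z + s *: v)) ('D_v F (z + t *: v)).
Proof.
move=> dF.
have E : (fun h : R => h^-1 *: (((fun s => F (z + s *: v)) \o shift t) (h *: 1) - F (z + t *: v)))
   = (fun h => h^-1 *: ((F \o shift (z + t *: v)) (h *: v) - F (z + t *: v))).
  apply/funext => h /=; congr (_ *: (F _ - _)).
  by rewrite [_%:A]mulr1 scalerDl addrCA addrA.
split; first by rewrite /derivable E.
by rewrite /derive E.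
Qed.

Variables n p : nat.
Local Notation V := ('rV[R]_n * 'rV[R]_p)%type.

Lemma snd_coord_diff (j : 'I_p) (w : V) :
  differentiable (fun u : V => u.2 0 j) w.
Proof.
have lin : linear (fun u : V => u.2 0 j).
  by move=> a u v /=; rewrite !mxE.
pose f : {linear V -> R} := HB.pack (fun u : V => u.2 0 j) (GRing.isLinear.Build _ _ _ _ _ lin).
rewrite (_ : (fun _ => _) = f) //; apply/linear_differentiable.
move=> u.
have -> : (f : V -> R) = (fun N : 'rV[R]_p => N 0 j) \o snd by [].
apply: continuous_comp; last exact: coord_continuous.
exact: cvg_snd.
Qed.

Lemma is_derive_quad (a b t : R) :
  is_derive t 1 (fun s : R => a * s + b * (s * s)) (a + b * (t + t)).
Proof.
have -> : (fun s : R => a * s + b * (s * s)) =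
   (a \*: (@id R)) + (b \*: ((@id R) * (@id R))) by apply/funext => s.
by apply: is_derive_eq; rewrite /GRing.scale /= !mulr1.
Qed.

Definition N {m : nat} (v : 'rV[R]_m) : R := \sum_i v 0 i ^+ 2.

Lemma N_ge0 {m} (v : 'rV[R]_m) : 0 <= N v.
Proof. by apply: sumr_ge0 => i _; exact: sqr_ge0. Qed.

Lemma enorm_sq {m} (v : 'rV[R]_m) : enorm v ^+ 2 = N v.
Proof. by rewrite /enorm sqr_sqrtr //; exact: N_ge0. Qed.

Lemma D_pair (F : V -> R) (w : V) (d : 'rV[R]_p) : differentiable F w ->
  'D_((0 : 'rV[R]_n), d) F w = \sum_j d 0 j * 'D_(@ey R n p j) F w.
Proof.
move=> dF; rewrite deriveE //.
have -> : ((0 : 'rV[R]_n), d) = \sum_j d 0 j *: @ey R n p j.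
  have E : forall u : V, u = (u.1, u.2) by case.
  rewrite [RHS]E (big_morph fst (id1 := 0) (op1 := +%R)) //.
  rewrite (big_morph snd (id1 := 0) (op1 := +%R)) //=.
  congr (_, _); last exact: row_sum_delta.
  by rewrite big1 // => j _; rewrite scaler0.
rewrite raddf_sum; apply: eq_bigr => j _.
by rewrite [LHS]linearZ /= -deriveE.
Qed.

Variable g : 'rV[R]_n -> 'rV[R]_p -> R.
Hypothesis Hd : twice_differentiable g.
Variable mu : R.
Hypothesis Hmu : forall x y (v : 'rV[R]_p),
      mu * enorm v ^+ 2 <= (v *m hess_yy g x y *m v^T) 0 0.

Local Notation psi j := (fun w : V => 'D_(@ey R n p j) (uncurry2 g) w).

Lemma psi_diff j w : differentiable (psi j) w.
Proof.
have -> : psi j = (fun u : V => u.2 0 j) \o grad g.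
  by apply/funext => -[a b]; rewrite /= mxE.
apply: differentiable_comp; first exact: Hd.2.
exact: snd_coord_diff.
Qed.

Lemma quad_ge (w : V) d :
  mu * N d <= \sum_j d 0 j * 'D_((0 : 'rV[R]_n), d) (psi j) w.
Proof.
rewrite (eq_bigr (fun j => d 0 j * \sum_i d 0 i * 'D_(@ey R n p i) (psi j) w));
  last by move=> j _; rewrite D_pair //; exact: psi_diff.
have E : (d *m hess_yy g w.1 w.2 *m d^T) 0 0 =
    \sum_j d 0 j * \sum_i d 0 i * 'D_(@ey R n p i) (psi j) w.
  rewrite mxE; transitivity (\sum_k (\sum_i d 0 i * hess_yy g w.1 w.2 i k) * d 0 k).
    by apply: eq_bigr => k _; rewrite !mxE.
  transitivity (\sum_k \sum_i d 0 i * 'D_(@ey R n p k) (psi i) w * d 0 k).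
    apply: eq_bigr => k _; rewrite mulr_suml; apply: eq_bigr => i _.
    by rewrite mxE; case: w.
  rewrite exchange_big /=; apply: eq_bigr => i _.
  rewrite mulr_sumr; apply: eq_bigr => k _.
  by rewrite mulrA mulrAC.
by rewrite -E -enorm_sq.
Qed.


Lemma line_sum_derive (h : 'I_p -> V -> R) (c : 'I_p -> R) (z v : V) t :
  (forall j, derivable (h j) (z + t *: v) v) ->
  is_derive t 1 (fun s => \sum_j c j * h j (z + s *: v))
    (\sum_j c j * 'D_v (h j) (z + t *: v)).
Proof.
move=> dh.
have -> : (fun s => \sum_j c j * h j (z + s *: v)) =
    \sum_j (fun s => c j * h j (z + s *: v)) by rewrite fct_sumE.
apply: is_derive_sum => j.
have -> : (fun s => c j * h j (z + s *: v)) = c j \*: (fun s => h j (z + s *: v)) by [].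
by apply: is_deriveZ; apply: line_is_derive.
Qed.

Definition phi (x : 'rV[R]_n) (y : 'rV[R]_p) (d : 'rV[R]_p) (s : R) :=
  \sum_j d 0 j * psi j ((x, y) + s *: ((0 : 'rV[R]_n), d)).

Definition dphi (x : 'rV[R]_n) (y : 'rV[R]_p) (d : 'rV[R]_p) (s : R) :=
  \sum_j d 0 j * 'D_((0 : 'rV[R]_n), d) (psi j) ((x, y) + s *: ((0 : 'rV[R]_n), d)).

Lemma phi_derive (x : 'rV[R]_n) (y d : 'rV[R]_p) (t : R) : is_derive t 1 (phi x y d) (dphi x y d t).
Proof.
by apply: line_sum_derive => j; apply: diff_derivable; exact: psi_diff.
Qed.

Lemma phi_mono (x : 'rV[R]_n) (y d : 'rV[R]_p) (s : R) : 0 <= s -> phi x y d 0 + mu * s * N d <= phi x y d s.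
Proof.
move=> s0.
have cont : {within `[0, s], continuous (phi x y d)}.
  apply: derivable_within_continuous => t _.
  exact: (@ex_derive _ _ _ _ _ _ _ (phi_derive x y d t)).
have [c _ E] := MVT_segment s0 (fun t _ => phi_derive x y d t) cont.
rewrite -lerBrDl E subr0 [mu * s]mulrC -mulrA mulrC.
by apply: ler_wpM2r => //; exact: quad_ge.
Qed.


Definition chi (x : 'rV[R]_n) (y d : 'rV[R]_p) (s : R) :=
  uncurry2 g ((x, y) + s *: ((0 : 'rV[R]_n), d)).

Lemma chi_derive (x : 'rV[R]_n) (y d : 'rV[R]_p) (t : R) :
  is_derive t 1 (chi x y d) (phi x y d t).
Proof.
apply: is_derive_eq; first by apply: line_is_derive; apply: diff_derivable; exact: Hd.1.
by rewrite D_pair //; exact: Hd.1.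
Qed.

Lemma SC (x : 'rV[R]_n) (y d : 'rV[R]_p) :
  g x y + \sum_j d 0 j * grad_y g x y 0 j + mu / 2 * N d <= g x (y + d).
Proof.
set a := \sum_j d 0 j * grad_y g x y 0 j.
set b := mu / 2 * N d.
have Ea : a = phi x y d 0.
  rewrite /a /phi scale0r addr0; apply: eq_bigr => j _; by rewrite mxE.
pose xi : R -> R := (chi x y d : R -> R) - (fun s : R => a * s + b * (s * s)).
have dxi : forall t : R, is_derive t 1 xi (phi x y d t - (a + b * (t + t))).
  by move=> t; apply: is_deriveB; [exact: chi_derive | exact: is_derive_quad].
have cont : {within `[0, 1], continuous xi}.
  apply: derivable_within_continuous => t _.
  exact: (@ex_derive _ _ _ _ _ _ _ (dxi t)).
have [c cin E] := MVT_segment ler01 (fun t _ => dxi t) cont.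
move: cin; rewrite in_itv /= => /andP[c0 _].
have h0 : 0 <= phi x y d c - (a + b * (c + c)).
  have := phi_mono x y d c c0; rewrite -Ea /b subr_ge0.
  have -> : mu / 2 * N d * (c + c) = mu * c * N d by field.
  by [].
have H : xi 0 <= xi 1 by rewrite -subr_ge0 E subr0 mulr1.
have H' : uncurry2 g ((x,y) + 0 *: ((0 : 'rV[R]_n),d)) - (a*0 + b*(0*0)) <=
   uncurry2 g ((x,y) + 1 *: ((0 : 'rV[R]_n),d)) - (a*1 + b*(1*1)) by exact: H.
move: H'; rewrite !scale0r !scale1r !addr0 !mulr0 !mulr1 /uncurry2 /= !addr0 subr0 => H2; lra.
Qed.


Hypothesis mu0 : 0 < mu.

Lemma young1 (al u v : R) : 0 < al ->
  - (al * u ^+ 2 + v ^+ 2 / (4 * al)) <= u * v /\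
  u * v <= al * u ^+ 2 + v ^+ 2 / (4 * al).
Proof.
move=> al0.
have h1 : 0 <= (2 * al * u + v) ^+ 2 / (4 * al) by apply: divr_ge0; [exact: sqr_ge0|lra].
have h2 : 0 <= (2 * al * u - v) ^+ 2 / (4 * al) by apply: divr_ge0; [exact: sqr_ge0|lra].
have e1 : (2 * al * u + v) ^+ 2 / (4 * al) = al * u ^+ 2 + v ^+ 2 / (4 * al) + u * v.
  by field; lra.
have e2 : (2 * al * u - v) ^+ 2 / (4 * al) = al * u ^+ 2 + v ^+ 2 / (4 * al) - u * v.
  by field; lra.
split; lra.
Qed.

Lemma young_lo (al : R) (u v : 'rV[R]_p) : 0 < al ->
  - (al * N u + N v / (4 * al)) <= \sum_j u 0 j * v 0 j.
Proof.
move=> al0; rewrite /N mulr_sumr mulr_suml -big_split -sumrN /=.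
by apply: ler_sum => j _; have [] := young1 al (u 0 j) (v 0 j) al0.
Qed.

Lemma young_hi (al : R) (u v : 'rV[R]_p) : 0 < al ->
  \sum_j u 0 j * v 0 j <= al * N u + N v / (4 * al).
Proof.
move=> al0; rewrite /N mulr_sumr mulr_suml -big_split /=.
by apply: ler_sum => j _; have [] := young1 al (u 0 j) (v 0 j) al0.
Qed.

Lemma N_add (u v : 'rV[R]_p) : N (u + v) <= 2 * N u + 2 * N v.
Proof.
rewrite /N !mulr_sumr -big_split /=; apply: ler_sum => j _; rewrite mxE.
have := sqr_ge0 (u 0 j - v 0 j); nra.
Qed.

Lemma N_eq0 {m} (u : 'rV[R]_m) : N u = 0 -> u = 0.
Proof.
move=> /eqP; rewrite psumr_eq0 => [/allP H|i _]; last exact: sqr_ge0.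
apply/rowP => i; rewrite mxE; apply/eqP; rewrite -sqrf_eq0.
by apply: (implyP (H i _)) => //; rewrite mem_index_enum.
Qed.

Lemma N_ge_coord {m} (u : 'rV[R]_m) i : u 0 i ^+ 2 <= N u.
Proof.
rewrite /N (bigD1 i) //= lerDl; apply: sumr_ge0 => k _; exact: sqr_ge0.
Qed.

Lemma hess_unit x y : hess_yy g x y \in unitmx.
Proof.
rewrite -row_free_unit; apply/inj_row_free => v vH0.
apply: N_eq0; apply/eqP; rewrite eq_le N_ge0 andbT.
have := Hmu x y v; rewrite vH0 mul0mx mxE enorm_sq.
by rewrite pmulr_rle0.
Qed.

Lemma inv_bound x y : N (grad_y g x y *m invmx (hess_yy g x y)) <= N (grad_y g x y) / mu ^+ 2.
Proof.
set G := grad_y g x y; set H := hess_yy g x y; set w := G *m invmx H.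
have wH : w *m H = G by rewrite /w mulmxKV //; exact: hess_unit.
have E : (G *m w^T) 0 0 = \sum_k w 0 k * G 0 k.
  by rewrite mxE; apply: eq_bigr => k _; rewrite [w^T k 0]mxE mulrC.
have := Hmu x y w; rewrite wH enorm_sq E => h1.
clearbody w G H.
have m0 := mu0; clear E wH.
have hm2 : 0 < mu / 2 by lra.
have h3 := young_hi (mu / 2) w G hm2.
have e : N G / (4 * (mu / 2)) = N G / (2 * mu) by field; lra.
rewrite e in h3.
have h4 : mu / 2 * N w <= N G / (2 * mu) by lra.
rewrite ler_pdivlMr; last exact: exprn_gt0.
have : mu / 2 * N w * (2 * mu) <= N G / (2 * mu) * (2 * mu).
  by apply: ler_wpM2r => //; lra.
have -> : N G / (2 * mu) * (2 * mu) = N G by field; lra.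
by move=> h5; nra.
Qed.


Lemma gx_cont x : continuous (g x).
Proof.
move=> y.
have -> : g x = uncurry2 g \o (fun y : 'rV[R]_p => (x, y)) by apply/funext.
apply: differentiable_continuous; apply: differentiable_comp; last exact: Hd.1.
by apply: differentiable_pair.
Qed.


Lemma min_exists x : exists y0, forall y', g x y0 <= g x y'.
Proof.
have m0 := mu0.
set G0 := grad_y g x 0.
have q0 : 0 <= N G0 := N_ge0 G0.
have coer : forall y, g x 0 - N G0 / mu + mu / 4 * N y <= g x y.
  move=> y; have := SC x 0 y; rewrite add0r.
  have hm4 : 0 < mu / 4 by lra.
  have := young_lo (mu / 4) y G0 hm4.
  have -> : N G0 / (4 * (mu / 4)) = N G0 / mu by field; lra.
  rewrite -/G0; lra.
set r := 1 + 4 * (N G0 / mu ^+ 2).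
have t0 : 0 <= N G0 / mu ^+ 2 by apply: divr_ge0 => //; exact: sqr_ge0.
have r1 : 1 <= r by rewrite /r; lra.
pose K := [set v : 'rV[R]_p | forall i, `[- r, r]%classic (v ord0 i)].
have cK : compact K.
  by apply: (@rV_compact _ _ (fun=> `[- r, r]%classic)) => i; exact: segment_compact.
have K0 : K 0 by move=> i; rewrite /= in_itv /= mxE; apply/andP; split; lra.
have [c cK' Hc] := @EVT_min_rV R p (g x) K (ex_intro _ 0 K0) cK
   (continuous_subspaceT (gx_cont x)).
exists c => y'.
have gc0 : g x c <= g x 0 by apply: Hc; exact: mem_set.
case: (pselect (K y')) => [Ky | nKy]; first by apply: Hc; exact: mem_set.
apply: le_trans gc0 _.
have [i Hi] := (iffRL (existsNP _)) nKy.
have Hi' : ~ (- r <= y' 0 i <= r) by move=> h; apply: Hi; rewrite /= in_itv /=.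
have hy : r * r <= y' 0 i ^+ 2.
  case: (lerP (- r) (y' 0 i)) => h1; case: (lerP (y' 0 i) r) => h2.
  - by exfalso; apply: Hi'; rewrite h1 h2.
  - nra.
  - nra.
  - lra.
have hN := N_ge_coord y' i.
have := coer y'.
set M := N y' in hN *; set q := N G0 in q0 t0 *; set tt := q / mu ^+ 2 in t0 *.
have e1 : q / mu = mu * tt by rewrite /tt /q; field; lra.
rewrite e1.
have hr : r = 1 + 4 * tt by [].
have hrr : r <= r * r by nra.
have hM : 0 <= M - 1 - 4 * tt by lra.
have : 0 <= mu * (M - 1 - 4 * tt) by apply: mulr_ge0; lra.
nra.
Qed.

End S.
Arguments N {R m}.

Lemma final_ineq (R : realType) (Mf beta K s q : R) : 0 < beta -> 0 < K -> 0 <= s ->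
  s ^+ 2 <= K * q -> Mf * s <= Mf ^+ 2 * K / (2 * beta) + beta / 2 * q.
Proof.
move=> b0 k0 s0 h.
have h1 := sqr_ge0 (beta * s - Mf * K).
have h2 : 0 <= beta ^+ 2 * (K * q - s ^+ 2) by apply: mulr_ge0; [exact: sqr_ge0 | lra].
have e : Mf ^+ 2 * K / (2 * beta) + beta / 2 * q - Mf * s =
   ((beta * s - Mf * K) ^+ 2 + beta ^+ 2 * (K * q - s ^+ 2)) / (2 * beta * K).
  by field; apply/andP; split; lra.
rewrite -subr_ge0 e; apply: divr_ge0; first lra.
by apply: mulr_ge0; [apply: mulr_ge0|]; lra.
Qed.

Theorem proposition3p3 (R : realType) (n p : nat)
  (f g : 'rV[R]_n -> 'rV[R]_p -> R)
  (Df : 'rV[R]_n * 'rV[R]_p -> set ('rV[R]_n * 'rV[R]_p))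
  (Mf mu Lg Qg beta : R) :
  (* (A1) *)
  0 < Mf -> 0 < mu -> 0 < Lg -> 0 < Qg ->
  lipschitz2 f Mf ->
  twice_differentiable g ->
  (forall x y (v : 'rV[R]_p),
      mu * enorm v ^+ 2 <= (v *m hess_yy g x y *m v^T) 0 0) ->
  (forall z z' : 'rV[R]_n * 'rV[R]_p,
      pnorm (grad g z - grad g z') <= Lg * pnorm (z - z')) ->
  (forall x y x' y',
      opnorm (hess_yy g x y - hess_yy g x' y') <= Qg * pnorm ((x, y) - (x', y'))) ->
  (forall x y x' y',
      opnorm (hess_xy g x y - hess_xy g x' y') <= Qg * pnorm ((x, y) - (x', y'))) ->
  (forall i j, C1 (fun z : 'rV[R]_n * 'rV[R]_p => hess_yy g z.1 z.2 i j)) ->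
  (* (A2) *)
  conservative_field Df ->
  (forall z, convex_set_of (Df z)) ->
  (forall z v, Df z v -> pnorm v <= Mf) ->
  potential_of f Df ->
  (* hypotheses of the proposition *)
  0 < beta ->
  Mf * Qg / mu ^+ 3 <= beta ->
  (exists c : R, forall x : 'rV[R]_n, c <= f x (ystar g x)) ->
  exists c : R, forall (x : 'rV[R]_n) (y : 'rV[R]_p), c <= hfun f g beta x y.
Proof.
move=> Mf0 mu0 Lg0 Qg0 Hlip Hd Hmu _ _ _ _ _ _ _ _ beta0 _ [c0 Hc0].
have K0 : 0 < 10 / mu ^+ 2 by apply: divr_gt0 => //; exact: exprn_gt0.
exists (c0 - Mf ^+ 2 * (10 / mu ^+ 2) / (2 * beta)) => x y.
have [y0 Hy0] := @min_exists _ _ _ _ Hd _ Hmu mu0 x.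
have Hys : forall y', g x (ystar g x) <= g x y'.
  have : [set y | forall y', g x y <= g x y'] (xget 0 [set y | forall y', g x y <= g x y']).
    by apply: xgetPex; exists y0.
  done.
have hc := Hc0 x.
have hSC := @SC _ _ _ _ Hd _ Hmu x y (ystar g x - y).
have ey : y + (ystar g x - y) = ystar g x by rewrite addrC subrK.
rewrite ey in hSC.
have hmin := Hys y.
have hm4 : 0 < mu / 4 by lra.
have hy := @young_lo _ _ (mu / 4) (ystar g x - y) (grad_y g x y) hm4.
have hw := @inv_bound _ _ _ _ _ Hmu mu0 x y.
have hA : ystar g x - Amap g x y =
    (ystar g x - y) + grad_y g x y *m invmx (hess_yy g x y).
  by rewrite /Amap opprB addrA addrAC.
have hN := @N_add _ _ (ystar g x - y) (grad_y g x y *m invmx (hess_yy g x y)).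
have hL := Hlip x (ystar g x) x (Amap g x y).
rewrite /pnorm /= subrr !enorm_sq hA in hL.
have N00 : N (0 : 'rV[R]_n) = 0 by rewrite /N big1 // => i _; rewrite mxE expr0n.
rewrite N00 add0r in hL.
rewrite /hfun enorm_sq.
have hn := ler_norm (f x (ystar g x) - f x (Amap g x y)).
set s := Num.sqrt _ in hL.
have s0 : 0 <= s by exact: sqrtr_ge0.
have s2 : s ^+ 2 = N (ystar g x - y + grad_y g x y *m invmx (hess_yy g x y)).
  by rewrite sqr_sqrtr //; exact: N_ge0.
move: hSC hmin hy hw hN hL hn s2.
set Nd := N (ystar g x - y).
set Nw := N (grad_y g x y *m invmx (hess_yy g x y)).
set NG := N (grad_y g x y).
set Nsum := N (_ + _).
set e := \sum_j _.
set fA := f x (Amap g x y).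
set fs := f x (ystar g x).
move=> hSC hmin hy hw hN hL hn s2.
have NG0 : 0 <= NG := @N_ge0 _ _ _.
have e1 : NG / (4 * (mu / 4)) = mu * (NG / mu ^+ 2) by field; lra.
rewrite e1 in hy.
have hd : Nd <= 4 * (NG / mu ^+ 2) by nra.
have hs : s ^+ 2 <= 10 / mu ^+ 2 * NG.
  have -> : 10 / mu ^+ 2 * NG = 10 * (NG / mu ^+ 2) by field; lra.
  lra.
have := @final_ineq _ Mf beta (10 / mu ^+ 2) s NG beta0 K0 s0 hs.
have hc' : c0 <= fs by exact: hc.
lra.
Qed.
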